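(* For every sufficiently large prime $p$, there is a set $A\subset\{1,2,\dots,\lfloor p/2\rfloor-1\}$ such that (i) the sets $A$ and $A+A+\{0,1\}$ are disjoint, and (ii) $A+A+A$ contains $p+2$ consecutive integers.
   Context: For sets $X,Y\subset\mathbb Z$, $X+Y=\{x+y:x\in X,y\in Y\}$. *)

(* Defs.v *)
From mathcomp Require Import all_boot.
Set Implicit Arguments. Unset Strict Implicit. Unset Printing Implicit Defensive.

(* Sumsets of finite sets of naturals (all sets here lie in N, so integer
   sumsets coincide with sumsets computed in nat). *)
Definition sumset (X Y : seq nat) : seq nat := [seq x + y | x <- X, y <- Y].

(* Main.v *)
Require Import Defs.
From mathcomp Require Import all_boot.
From mathcomp Require Import zify.

Lemma sumset_mem (X Y : seq nat) x y :
  x \in X -> y \in Y -> x + y \in sumset X Y.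
Proof. move=> hx hy; exact: (allpairs_f (fun a b => a + b) hx hy). Qed.

Lemma sumsetP (X Y : seq nat) z :
  z \in sumset X Y -> exists x y, x \in X /\ y \in Y /\ z = x + y.
Proof. by move/allpairsP=> [[x y] [/= hx hy ->]]; exists x, y. Qed.

Lemma cover3 a1 b1 a2 b2 a3 b3 t :
  a1 + a2 + a3 <= t <= b1 + b2 + b3 -> a1 <= b1 -> a2 <= b2 -> a3 <= b3 ->
  exists x y z, [/\ a1 <= x <= b1, a2 <= y <= b2, a3 <= z <= b3 & t = x + y + z].
Proof.
move=> ht h1 h2 h3.
exists (minn b1 (t - a2 - a3)), (minn b2 (t - minn b1 (t - a2 - a3) - a3)),
  (t - minn b1 (t - a2 - a3) - minn b2 (t - minn b1 (t - a2 - a3) - a3)).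
split; lia.
Qed.

Section Constr.
Variables q r N : nat.
Hypothesis hr : r < 200.
Definition a1 := 46*q+r+2.
Definition b1 := 69*q.
Definition a2 := 77*q.
Definition b2 := 84*q.
Definition s0 := 154*q-1.
Definition c0 := 168*q+2.
Definition AA : seq nat :=
  iota a1 (b1 - a1).+1 ++ iota a2 (b2 - a2).+1 ++ [:: s0] ++ iota c0 (N - c0).+1.

Lemma inAA x : 70 <= q -> 168*q+2 <= N -> x \in AA = [|| (a1 <= x <= b1), (a2 <= x <= b2),
   x == s0 | (c0 <= x <= N)].
Proof.
move=> hq hN.
rewrite /AA !mem_cat !mem_iota inE.
rewrite /a1 /b1 /a2 /b2 /s0 /c0.
have hr1 := hr.
apply/idP/idP; lia.
Qed.
End Constr.

Theorem lemma3p1 :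
  exists p0 : nat, forall p : nat, p0 <= p -> prime p ->
    exists A : seq nat,
      {subset A <= iota 1 (p./2 - 1)} /\
      (forall x : nat, x \in A -> x \notin sumset (sumset A A) [:: 0; 1]) /\
      exists m : nat, forall k : nat, k < p + 2 ->
        m + k \in sumset (sumset A A) A.
Proof.
exists (200 * 200) => p hp pp.
have hodd : odd p by case: (even_prime pp) => // e; rewrite e in hp.
have hpn := odd_double_half p; rewrite hodd in hpn.
move: hpn; set n := p./2 => hpn.
have hp2 : p = n * 2 + 1 by rewrite -hpn -muln2 /=; lia.
clearbody n.
have [N hN] : exists N, N = n - 1 by exists (n - 1).
have [q [r [hr hNqr]]] : exists q r, r < 200 /\ N = q * 200 + r.
  by exists (N %/ 200), (N %% 200); split; [apply: ltn_pmod | apply: divn_eq].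
have hq : 70 <= q.
  lia.
have hc : 168*q+2 <= N by lia.
rewrite -hN.
exists (AA q r N); split; [|split].
- move=> x; rewrite (inAA _ _ _ hr) // mem_iota /a1 /b1 /a2 /b2 /s0 /c0 => hx; lia.
- move=> x; rewrite (inAA _ _ _ hr) // => hx; apply/negP => /sumsetP [w [e [/sumsetP [y [z [hy [hz hw]]]] [he hx']]]].
  move: hy hz he; rewrite !(inAA _ _ _ hr) // !inE /a1 /b1 /a2 /b2 /s0 /c0 in hx * => hy hz he.
  lia.
- exists (N - 4) => k hk.
  have hit : forall x y z, x \in AA q r N -> y \in AA q r N -> z \in AA q r N ->
    x + y + z \in sumset (sumset (AA q r N) (AA q r N)) (AA q r N).
    by move=> x y z hx hy hz; apply: sumset_mem => //; apply: sumset_mem.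
  have ht : N - 4 + k <= 3 * N by lia.
  have ht' : N - 4 <= N - 4 + k by lia.
  move: ht ht'; move: (N - 4 + k) => t ht ht'.
  case: (leqP t ((69*q)+(69*q)+(84*q))) => ht0.
  +
    have [x [y [z [hx hy hz ->]]]] := cover3 (46*q+r+2) (69*q) (46*q+r+2) (69*q) (77*q) (84*q) t ltac:(lia) ltac:(lia) ltac:(lia) ltac:(lia).
    by apply: hit; rewrite (inAA _ _ _ hr) // /a1 /b1 /a2 /b2 /s0 /c0; lia.
  +
  case: (leqP t ((69*q)+(84*q)+(84*q))) => ht1.
  +
    have [x [y [z [hx hy hz ->]]]] := cover3 (46*q+r+2) (69*q) (77*q) (84*q) (77*q) (84*q) t ltac:(lia) ltac:(lia) ltac:(lia) ltac:(lia).
    by apply: hit; rewrite (inAA _ _ _ hr) // /a1 /b1 /a2 /b2 /s0 /c0; lia.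
  +
  case: (leqP t ((84*q)+(84*q)+(84*q))) => ht2.
  +
    have [x [y [z [hx hy hz ->]]]] := cover3 (77*q) (84*q) (77*q) (84*q) (77*q) (84*q) t ltac:(lia) ltac:(lia) ltac:(lia) ltac:(lia).
    by apply: hit; rewrite (inAA _ _ _ hr) // /a1 /b1 /a2 /b2 /s0 /c0; lia.
  +
  case: (leqP t ((69*q)+(69*q)+(154*q-1))) => ht3.
  +
    have [x [y [z [hx hy hz ->]]]] := cover3 (46*q+r+2) (69*q) (46*q+r+2) (69*q) (154*q-1) (154*q-1) t ltac:(lia) ltac:(lia) ltac:(lia) ltac:(lia).
    by apply: hit; rewrite (inAA _ _ _ hr) // /a1 /b1 /a2 /b2 /s0 /c0; lia.
  +
  case: (leqP t ((69*q)+(69*q)+N)) => ht4.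
  +
    have [x [y [z [hx hy hz ->]]]] := cover3 (46*q+r+2) (69*q) (46*q+r+2) (69*q) (168*q+2) N t ltac:(lia) ltac:(lia) ltac:(lia) ltac:(lia).
    by apply: hit; rewrite (inAA _ _ _ hr) // /a1 /b1 /a2 /b2 /s0 /c0; lia.
  +
  case: (leqP t ((84*q)+(84*q)+N)) => ht5.
  +
    have [x [y [z [hx hy hz ->]]]] := cover3 (77*q) (84*q) (77*q) (84*q) (168*q+2) N t ltac:(lia) ltac:(lia) ltac:(lia) ltac:(lia).
    by apply: hit; rewrite (inAA _ _ _ hr) // /a1 /b1 /a2 /b2 /s0 /c0; lia.
  +
  case: (leqP t ((69*q)+(154*q-1)+(154*q-1))) => ht6.
  +
    have [x [y [z [hx hy hz ->]]]] := cover3 (46*q+r+2) (69*q) (154*q-1) (154*q-1) (154*q-1) (154*q-1) t ltac:(lia) ltac:(lia) ltac:(lia) ltac:(lia).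
    by apply: hit; rewrite (inAA _ _ _ hr) // /a1 /b1 /a2 /b2 /s0 /c0; lia.
  +
  case: (leqP t ((69*q)+(154*q-1)+N)) => ht7.
  +
    have [x [y [z [hx hy hz ->]]]] := cover3 (46*q+r+2) (69*q) (154*q-1) (154*q-1) (168*q+2) N t ltac:(lia) ltac:(lia) ltac:(lia) ltac:(lia).
    by apply: hit; rewrite (inAA _ _ _ hr) // /a1 /b1 /a2 /b2 /s0 /c0; lia.
  +
  case: (leqP t ((84*q)+N+N)) => ht8.
  +
    have [x [y [z [hx hy hz ->]]]] := cover3 (77*q) (84*q) (168*q+2) N (168*q+2) N t ltac:(lia) ltac:(lia) ltac:(lia) ltac:(lia).
    by apply: hit; rewrite (inAA _ _ _ hr) // /a1 /b1 /a2 /b2 /s0 /c0; lia.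
  +
  case: (leqP t ((154*q-1)+(154*q-1)+N)) => ht9.
  +
    have [x [y [z [hx hy hz ->]]]] := cover3 (154*q-1) (154*q-1) (154*q-1) (154*q-1) (168*q+2) N t ltac:(lia) ltac:(lia) ltac:(lia) ltac:(lia).
    by apply: hit; rewrite (inAA _ _ _ hr) // /a1 /b1 /a2 /b2 /s0 /c0; lia.
  +
  case: (leqP t ((154*q-1)+N+N)) => ht10.
  +
    have [x [y [z [hx hy hz ->]]]] := cover3 (154*q-1) (154*q-1) (168*q+2) N (168*q+2) N t ltac:(lia) ltac:(lia) ltac:(lia) ltac:(lia).
    by apply: hit; rewrite (inAA _ _ _ hr) // /a1 /b1 /a2 /b2 /s0 /c0; lia.
  +
    have [x [y [z [hx hy hz ->]]]] := cover3 (168*q+2) N (168*q+2) N (168*q+2) N t ltac:(lia) ltac:(lia) ltac:(lia) ltac:(lia).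
    by apply: hit; rewrite (inAA _ _ _ hr) // /a1 /b1 /a2 /b2 /s0 /c0; lia.
Qed.
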